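(* Let $f:\mathbb{R}^n\to\mathbb{R}$ have $L$-Lipschitz continuous gradient ($L>0$) and satisfy the Polyak–Łojasiewicz condition with constant $\mu>0$: $f(x)-f^*\le \frac{1}{2\mu}\|\nabla f(x)\|^2$ for all $x$, where $f^*=f(x_* )$ for a minimizer $x_*$. Let $\Delta>0$ and suppose an inexact gradient $\widetilde{\nabla}f(x)$ is available with $\|\nabla f(x)-\widetilde{\nabla}f(x)\|\le\Delta$ for all $x$. Consider the gradient method $x_{k+1}=x_k-\frac1L\widetilde{\nabla}f(x_k)$ from $x_0$, and let $$N_*=\left\lceil\frac{L}{\mu}\ln\frac{\mu(f(x_0)-f^* )}{6\Delta^2}\right\rceil.$$ Suppose one of the following holds: (1) the method performs $N_*$ steps (output $\widehat{x}=x_{N_*}$); or (2) for some $N\le N_*$ the stopping criterion $\|\widetilde{\nabla}f(x_k)\|\le\sqrt6\,\Delta$ is satisfied for the first time at iteration $N$ (output $\widehat{x}=x_N$). Then $$f(\widehat{x})-f^*\le\frac{7\Delta^2}{\mu}$$ and $$\|\widehat{x}-x_0\|\le\frac{2\Delta}{\mu}\sqrt{1+\frac{L}{\mu}}\left\lceil\ln\frac{\mu(f(x_0)-f^* )}{6\Delta^2}\right\rceil+\frac{4\sqrt{L(f(x_0)-f^* )}}{\mu}.$$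
   Context: $\|\cdot\|$ is the Euclidean norm; $\lceil\cdot\rceil$ is the ceiling function. *)

(* Defs.v *)
From HB Require Import structures.
From mathcomp Require Import all_boot all_order all_algebra.
From mathcomp Require Import all_classical all_reals all_analysis.
Set Implicit Arguments. Unset Strict Implicit. Unset Printing Implicit Defensive.
Import Order.TTheory GRing.Theory Num.Theory.
Import numFieldNormedType.Exports.
Local Open Scope ring_scope.

Definition dotv {R : realType} {n : nat} (u v : 'rV[R]_n) : R :=
  \sum_(i < n) u ord0 i * v ord0 i.

Definition enorm {R : realType} {n : nat} (u : 'rV[R]_n) : R :=
  Num.sqrt (dotv u u).

Definition is_gradient {R : realType} {n : nat}
  (f : 'rV[R]_n -> R) (g : 'rV[R]_n -> 'rV[R]_n) : Prop :=
  forall x : 'rV[R]_n, differentiable f x /\ forall h, 'd f x h = dotv (g x) h.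

(* Main.v *)
Require Import Defs.
From HB Require Import structures.
From mathcomp Require Import all_boot all_order all_algebra.
From mathcomp Require Import all_classical all_reals all_analysis.
From mathcomp Require Import ring lra.
Import Order.TTheory GRing.Theory Num.Theory.
Import numFieldNormedType.Exports.
Local Open Scope ring_scope.

Section Dot.
Context {R : realType} {n : nat}.
Implicit Types u v w : 'rV[R]_n.

Lemma dotvC u v : dotv u v = dotv v u.
Proof. by apply: eq_bigr => i _; rewrite mulrC. Qed.

Lemma dotvDl u v w : dotv (u + v) w = dotv u w + dotv v w.
Proof. by rewrite /dotv -big_split; apply: eq_bigr => i _; rewrite !mxE mulrDl. Qed.

Lemma dotvZl a u w : dotv (a *: u) w = a * dotv u w.
Proof. by rewrite /dotv mulr_sumr; apply: eq_bigr => i _; rewrite !mxE mulrA. Qed.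

Lemma dotvNl u w : dotv (- u) w = - dotv u w.
Proof. by rewrite -scaleN1r dotvZl mulN1r. Qed.

Lemma dotvBl u v w : dotv (u - v) w = dotv u w - dotv v w.
Proof. by rewrite dotvDl dotvNl. Qed.

Lemma dotvDr u v w : dotv w (u + v) = dotv w u + dotv w v.
Proof. by rewrite dotvC dotvDl !(dotvC w). Qed.
Lemma dotvZr a u w : dotv w (a *: u) = a * dotv w u.
Proof. by rewrite dotvC dotvZl dotvC. Qed.
Lemma dotvNr u w : dotv w (- u) = - dotv w u.
Proof. by rewrite dotvC dotvNl dotvC. Qed.
Lemma dotvBr u v w : dotv w (u - v) = dotv w u - dotv w v.
Proof. by rewrite dotvDr dotvNr. Qed.

Lemma dotv_ge0 u : 0 <= dotv u u.
Proof. by apply: sumr_ge0 => i _; rewrite -expr2 sqr_ge0. Qed.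

Lemma enorm_ge0 u : 0 <= enorm u.
Proof. exact: sqrtr_ge0. Qed.

Lemma enorm_sq u : enorm u ^+ 2 = dotv u u.
Proof. by rewrite /enorm sqr_sqrtr // dotv_ge0. Qed.

Lemma dotv_eq0 u : dotv u u = 0 -> u = 0.
Proof.
move=> h; apply/rowP => i; rewrite mxE.
have /eqP := h; rewrite /dotv psumr_eq0; last by move=> j _; rewrite -expr2 sqr_ge0.
by move=> /allP /(_ i (mem_index_enum _)); rewrite -expr2 sqrf_eq0 => /eqP.
Qed.

Lemma dotv0l u : dotv 0 u = 0.
Proof. by rewrite -(scale0r 0) dotvZl mul0r. Qed.

Lemma cauchy_schwarz u v : dotv u v ^+ 2 <= dotv u u * dotv v v.
Proof.
have [v0|vn0] := eqVneq (dotv v v) 0.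
  by rewrite v0 (dotv_eq0 v v0) dotvC dotv0l expr0n /= !mulr0.
have vp : 0 < dotv v v by rewrite lt_def vn0 dotv_ge0.
set t := dotv u v / dotv v v.
have e : dotv (u - t *: v) (u - t *: v) = dotv u u - dotv u v ^+ 2 / dotv v v.
  rewrite !(dotvBl, dotvBr, dotvZl, dotvZr) (dotvC v u) /t.
  by field.
have := dotv_ge0 (u - t *: v).
rewrite e subr_ge0 ler_pdivrMr //.
Qed.

Lemma dotv_le u v : dotv u v <= enorm u * enorm v.
Proof.
rewrite /enorm -sqrtrM ?dotv_ge0 //.
apply: le_trans (ler_norm _) _.
rewrite -sqrtr_sqr; apply: ler_wsqrtr.
exact: cauchy_schwarz.
Qed.

Lemma enorm_triangle u v : enorm (u + v) <= enorm u + enorm v.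
Proof.
rewrite -(ler_pXn2r (n:=2)) //; last by rewrite nnegrE addr_ge0 ?enorm_ge0.
  2: by rewrite nnegrE enorm_ge0.
rewrite enorm_sq dotvDl !dotvDr sqrrD !enorm_sq (dotvC v u).
have := dotv_le u v; lra.
Qed.

Lemma enormN u : enorm (- u) = enorm u.
Proof. by rewrite /enorm dotvNl dotvNr opprK. Qed.

Lemma enormZ a u : enorm (a *: u) = `|a| * enorm u.
Proof. by rewrite /enorm dotvZl dotvZr mulrA -expr2 sqrtrM ?sqr_ge0 // sqrtr_sqr. Qed.

End Dot.

Section Desc.
Local Open Scope classical_set_scope.
Lemma line_derive {R : realType} {n : nat} (f : 'rV[R]_n -> R) g (x d : 'rV[R]_n) (t : R) :
  is_gradient f g ->
  is_derive t 1 (fun s : R => f (x + s *: d)) (dotv (g (x + t *: d)) d).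
Proof.
move=> hg.
pose l : R -> 'rV[R]_n := cst x + ( *:%R^~ d).
have Dl : is_diff t l (0 + *:%R^~ d) by apply: is_diffD.
have dl : differentiable l t by case: Dl.
have [dfl dfv] := hg (l t).
have -> : (fun s : R => f (x + s *: d)) = f \o l by [].
have dphi : differentiable (f \o l) t by apply: differentiable_comp.
apply: DeriveDef; first exact: diff_derivable.
rewrite deriveE // diff_comp // diff_val /= add0r scale1r dfv.
by [].
Qed.

Lemma descent {R : realType} {n : nat} (f : 'rV[R]_n -> R) g (L : R) :
  is_gradient f g -> (forall y z, enorm (g y - g z) <= L * enorm (y - z)) ->
  forall x y, f y <= f x + dotv (g x) (y - x) + L / 2 * enorm (y - x) ^+ 2.
Proof.
move=> hg hL x y.
set d := y - x; set a := dotv (g x) d; set b := L / 2 * enorm d ^+ 2.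
pose phi := fun s : R => f (x + s *: d).
pose psi : R -> R := (phi - a \*: (id : R -> R)) - b \*: ((id : R -> R) ^+ 2).
have Dpsi (c : R) : is_derive c 1 psi (dotv (g (x + c *: d)) d - a - b * (2 * c)).
  apply: is_derive_eq.
    apply: is_deriveB; apply: is_deriveB; exact: line_derive.
  have sc : forall r : R, r%:A = r by move=> r; exact: mulr1.
  by rewrite /= !sc [b *: _]/(b * _) expr1.
have cont : {within `[0, 1], continuous psi}.
  apply: derivable_within_continuous => c _.
  by have [] := Dpsi c.
have [c /andP[c0 c1] eq] := MVT ltr01 (fun c _ => Dpsi c) cont.
have : psi 1 - psi 0 <= 0.
  rewrite eq subr0 mulr1.
  have h1 : dotv (g (x + c *: d)) d - a = dotv (g (x + c *: d) - g x) d by rewrite dotvBl.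
  rewrite h1.
  have h2 := dotv_le (g (x + c *: d) - g x) d.
  have h3 := hL (x + c *: d) x.
  have e : x + c *: d - x = c *: d by rewrite addrC addKr.
  rewrite e enormZ ger0_norm in h3; last by rewrite ltW.
  have h4 : enorm (g (x + c *: d) - g x) * enorm d <= L * (c * enorm d) * enorm d.
    by apply: ler_wpM2r; [exact: enorm_ge0 | exact: h3].
  rewrite /b; lra.
rewrite /psi /phi /= !fctE /=.
have -> : x + 1 *: d = y by rewrite scale1r /d addrC subrK.
have sc : forall r : R, r%:A = r by move=> r; exact: mulr1.
rewrite scale0r addr0 expr1n expr0n /= !scaler0 !sc; lra.
Qed.

End Desc.

Lemma grad_bound {R : realType} {n : nat} (f : 'rV[R]_n -> R) g (L fs : R) :
  0 < L -> is_gradient f g -> (forall y z, enorm (g y - g z) <= L * enorm (y - z)) ->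
  (forall y, fs <= f y) ->
  forall y, enorm (g y) ^+ 2 <= 2 * L * (f y - fs).
Proof.
move=> L0 hg hL hmin y.
have h1 := descent f g L hg hL y (y - L^-1 *: g y).
have h2 := hmin (y - L^-1 *: g y).
move: h1; rewrite (addrC y) addrK dotvNr dotvZr enormN enormZ gtr0_norm ?invr_gt0 //.
rewrite exprMn -enorm_sq.
set G := enorm (g y) ^+ 2 => h1.
have e : L / 2 * (L^-1 ^+ 2 * G) = L^-1 * G / 2 by field; rewrite lt0r_neq0.
rewrite e addrC in h1.

have h3 : L^-1 * G <= 2 * (f y - fs) by lra.
have e2 : G = L * (L^-1 * G) by field; rewrite lt0r_neq0.
have h4 := ler_wpM2l (ltW L0) h3.
rewrite e2; lra.
Qed.

Lemma step_bound {R : realType} {n : nat} (f : 'rV[R]_n -> R) g gt (L Delta : R) :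
  0 < L -> is_gradient f g -> (forall y z, enorm (g y - g z) <= L * enorm (y - z)) ->
  (forall y, enorm (g y - gt y) <= Delta) ->
  forall y, f (y - L^-1 *: gt y) <= f y + L^-1 * ((Delta ^+ 2 - enorm (g y) ^+ 2) / 2).
Proof.
move=> L0 hg hL hgt y.
have h1 := descent f g L hg hL y (y - L^-1 *: gt y).
move: h1; rewrite (addrC y) addrK dotvNr dotvZr enormN enormZ gtr0_norm ?invr_gt0 //.
rewrite exprMn !enorm_sq.
have e : L / 2 * (L^-1 ^+ 2 * dotv (gt y) (gt y)) = L^-1 * (dotv (gt y) (gt y) / 2)
  by field; rewrite lt0r_neq0.
rewrite e => h1.
have h2 : dotv (g y - gt y) (g y - gt y) <= Delta ^+ 2.
  rewrite -enorm_sq; apply: lerXn2r; rewrite ?nnegrE ?enorm_ge0 //.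
  exact: le_trans (enorm_ge0 _) (hgt y).
move: h2; rewrite !(dotvBl, dotvBr) (dotvC (gt y) (g y)) => h2.
have h3 : - dotv (g y) (gt y) + dotv (gt y) (gt y) / 2 <=
   (Delta ^+ 2 - dotv (g y) (g y)) / 2 by lra.
have Li : 0 <= L^-1 by rewrite invr_ge0 ltW.
have h4 := ler_wpM2l Li h3.
lra.
Qed.

Theorem theorem3 (R : realType) (n : nat)
  (f : 'rV[R]_n -> R) (g gt : 'rV[R]_n -> 'rV[R]_n) (L mu Delta : R)
  (xstar : 'rV[R]_n) (x : nat -> 'rV[R]_n) (N : nat) :
  0 < L -> 0 < mu -> 0 < Delta ->
  is_gradient f g ->
  (forall y z, enorm (g y - g z) <= L * enorm (y - z)) ->
  (forall y, f xstar <= f y) ->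
  (forall y, f y - f xstar <= (2 * mu)^-1 * enorm (g y) ^+ 2) ->
  (forall y, enorm (g y - gt y) <= Delta) ->
  (forall k, x k.+1 = x k - L^-1 *: gt (x k)) ->
  let Nstar : int :=
    Num.ceil (L / mu * ln (mu * (f (x 0%N) - f xstar) / (6 * Delta ^+ 2))) in
  ((N%:Z = Nstar) \/
   ((N%:Z <= Nstar) /\ enorm (gt (x N)) <= Num.sqrt 6 * Delta /\
    (forall k, (k < N)%N -> Num.sqrt 6 * Delta < enorm (gt (x k))))) ->
  f (x N) - f xstar <= 7 * Delta ^+ 2 / mu /\
  enorm (x N - x 0%N) <=
    2 * Delta / mu * Num.sqrt (1 + L / mu) *
      (Num.ceil (ln (mu * (f (x 0%N) - f xstar) / (6 * Delta ^+ 2))))%:~R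
    + 4 * Num.sqrt (L * (f (x 0%N) - f xstar)) / mu.
Proof.
move=> L0 mu0 D0 hg hL hmin hPL hgt hx Nstar hN.
set fs := f xstar.
set a0 := f (x 0%N) - fs.
set r := mu * a0 / (6 * Delta ^+ 2).
set t := ln r.
have dge0 y : 0 <= f y - fs by rewrite subr_ge0.
have gb := grad_bound f g L fs L0 hg hL hmin.
have sb := step_bound f g gt L Delta L0 hg hL hgt.
have NleNs : N%:Z <= Nstar by case: hN => [->|[]].
have Nsge0 : 0 <= Nstar by apply: le_trans NleNs.
have D2 : 0 < Delta ^+ 2 by rewrite exprn_gt0.
have [a00|a0pos] := eqVneq a0 0.
  have r0 : r = 0 by rewrite /r a00 mulr0 mul0r.
  have t0 : t = 0 by rewrite /t r0 ln0.
  have Ns0 : Nstar = 0 by rewrite /Nstar -/fs -/a0 -/r -/t t0 mulr0 ceil0.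
  have N0 : N = 0%N by move: NleNs; rewrite Ns0; case: (N).
  rewrite N0 subrr -/fs -/a0 -/r -/t t0 ceil0 a00 !mulr0 sqrtr0 mulr0 mul0r add0r.
  split; first by rewrite divr_ge0 ?mulr_ge0 // ltW.
  by rewrite /enorm /dotv big1 ?sqrtr0 // => i _; rewrite mxE mul0r.
have a0gt : 0 < a0 by rewrite lt_def a0pos dge0.
have muL : mu <= L.
  have h1 := hPL (x 0%N); have h2 := gb (x 0%N).
  rewrite -/fs -/a0 in h1 h2.
  have h3 : a0 <= (2 * mu)^-1 * (2 * L * a0).
    apply: le_trans h1 _; apply: ler_wpM2l => //; rewrite invr_ge0 mulr_ge0 // ltW //.
  have e : (2 * mu)^-1 * (2 * L * a0) = L / mu * a0 by field; rewrite lt0r_neq0.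
  rewrite e in h3.
  have h4 := ler_wpM2l (ltW mu0) h3.
  have e2 : mu * (L / mu * a0) = L * a0 by field; rewrite lt0r_neq0.
  rewrite e2 in h4.
  by rewrite -(ler_pM2r a0gt).
pose q : R := 1 - mu / L.
have q0 : 0 <= q by rewrite /q subr_ge0 ler_pdivrMr // mul1r.
have q1 : q < 1 by rewrite /q ltrBlDr ltrDl divr_gt0.
have drec k : f (x k.+1) - fs <= q * (f (x k) - fs) + Delta ^+ 2 / (2 * L).
  rewrite hx.
  have h1 := sb (x k); have h2 := hPL (x k).
  rewrite -/fs in h2.
  set G := enorm (g (x k)) ^+ 2 in h1 h2.
  set dk := f (x k) - fs in h2 *.
  have hG : 2 * mu * dk <= G.
    have h2m : 0 <= 2 * mu by rewrite mulr_ge0 // ltW.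
    have := ler_wpM2l h2m h2.
    have e : 2 * mu * ((2 * mu)^-1 * G) = G by field; rewrite lt0r_neq0.
    by rewrite e.
  have Li : 0 <= L^-1 by rewrite invr_ge0 ltW.
  have h3 : L^-1 * ((Delta ^+ 2 - G) / 2) <= L^-1 * ((Delta ^+ 2 - 2 * mu * dk) / 2).
    apply: ler_wpM2l => //; lra.
  have e : L^-1 * ((Delta ^+ 2 - 2 * mu * dk) / 2) = Delta ^+ 2 / (2 * L) - mu / L * dk.
    by field; rewrite lt0r_neq0.
  move: h1 h3 e; rewrite /q /dk; lra.
have dbound k : f (x k) - fs <= q ^+ k * a0 + Delta ^+ 2 / (2 * mu).
  elim: k => [|k IH].
    by rewrite expr0 mul1r lerDl; apply: divr_ge0; [exact: ltW D2 | rewrite mulr_ge0 // ltW].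
  apply: le_trans (drec k) _.
  have := ler_wpM2l q0 IH.
  have e : q * (Delta ^+ 2 / (2 * mu)) + Delta ^+ 2 / (2 * L) = Delta ^+ 2 / (2 * mu).
    by rewrite /q; field; rewrite !lt0r_neq0.
  rewrite [q ^+ k.+1]exprS; lra.
have kap1 : 1 <= L / mu by rewrite ler_pdivlMr // mul1r.
have kap0 : 0 < L / mu by rewrite divr_gt0.
have rpos : 0 < r by rewrite /r divr_gt0 ?mulr_gt0.
have fbound : f (x N) - fs <= 7 * Delta ^+ 2 / mu.
  case: hN => [hNe | [_ [hstop _]]].
    have NR : L / mu * t <= N%:R.
      have := ceil_ge (L / mu * t); rewrite -/Nstar -hNe; exact.
    have qexp : q <= expR (- (mu / L)) by have := expR_ge1Dx (- (mu / L)).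
    have qN : q ^+ N <= expR (- (mu / L)) ^+ N.
      by apply: lerXn2r; rewrite ?nnegrE ?expR_ge0.
    rewrite -expRM_natl in qN.
    have h1 : N%:R * - (mu / L) <= - t.
      have h0 : 0 <= mu / L by rewrite divr_ge0 // ltW.
      have := ler_wpM2l h0 NR.
      have e : mu / L * (L / mu * t) = t by field; rewrite !lt0r_neq0.
      by rewrite e mulrN lerN2 [N%:R * _]mulrC.
    have {}h1 : expR (N%:R * - (mu / L)) <= expR (- t) by rewrite ler_expR.
    have qr : q ^+ N <= r^-1.
      by apply: le_trans qN (le_trans h1 _); rewrite expRN lnK.
    have h2 := ler_wpM2r (ltW a0gt) qr.
    have e : r^-1 * a0 = 6 * Delta ^+ 2 / mu.
      by rewrite /r; field; rewrite !lt0r_neq0 // exprn_gt0.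
    have e2 : Delta ^+ 2 / (2 * mu) = (Delta ^+ 2 / mu) / 2 by field; rewrite lt0r_neq0.
    have e3 : 7 * Delta ^+ 2 / mu = 7 * (Delta ^+ 2 / mu) by rewrite mulrA.
    have e4 : 6 * Delta ^+ 2 / mu = 6 * (Delta ^+ 2 / mu) by rewrite mulrA.
    have hD : 0 <= Delta ^+ 2 / mu by rewrite divr_ge0 // ltW.
    have := dbound N; lra.
  have h1 := hPL (x N); rewrite -/fs in h1.
  have h2 : enorm (g (x N)) <= Num.sqrt 6 * Delta + Delta.
    have -> : g (x N) = gt (x N) + (g (x N) - gt (x N)) by rewrite addrC subrK.
    apply: le_trans (enorm_triangle _ _) _.
    by apply: lerD => //; exact: hgt.
  have s6 : Num.sqrt 6 ^+ 2 = 6 :> R by rewrite sqr_sqrtr.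
  have s60 : 0 <= Num.sqrt 6 :> R by exact: sqrtr_ge0.
  have s6le : Num.sqrt 6 <= 5 / 2 :> R by nra.
  have h3 : enorm (g (x N)) ^+ 2 <= (Num.sqrt 6 * Delta + Delta) ^+ 2.
    by apply: lerXn2r; rewrite ?nnegrE ?enorm_ge0 // addr_ge0 ?mulr_ge0 // ltW.
  have h4 : (Num.sqrt 6 * Delta + Delta) ^+ 2 <= 14 * Delta ^+ 2 by nra.
  have h5 := ler_wpM2l (_ : 0 <= (2 * mu)^-1) (le_trans h3 h4).
  apply: le_trans h1 (le_trans (h5 _) _).
    by rewrite invr_ge0 mulr_ge0 // ltW.
  by rewrite le_eqVlt; apply/orP; left; apply/eqP; field; rewrite lt0r_neq0.
split => //.
have Ssqrt0 : 0 <= Num.sqrt (1 + L / mu) by exact: sqrtr_ge0.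
have A0 : 0 <= Num.sqrt (L * a0) by exact: sqrtr_ge0.
case: (posnP N) => [N0 | Npos].
  rewrite N0 subrr.
  have -> : enorm (0 : 'rV[R]_n) = 0.
    by rewrite /enorm /dotv big1 ?sqrtr0 // => i _; rewrite mxE mul0r.
  have h1 : -1 < L / mu * t by rewrite -ceil_ge0.
  have h2 : -1 < t by case: (lerP 0 t) => ht; nra.
  have h3 : 0 <= (Num.ceil t)%:~R :> R by rewrite ler0z ceil_ge0.
  have m0 : 0 <= mu by exact: ltW.
  have d0 : 0 <= Delta by exact: ltW.
  apply: addr_ge0.
    by apply: mulr_ge0 => //; apply: mulr_ge0 => //; apply: divr_ge0 => //; apply: mulr_ge0.
  by apply: divr_ge0 => //; apply: mulr_ge0.
have Ns1 : 0 < Nstar by apply: lt_le_trans NleNs; rewrite ltz_nat.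
have kt0 : 0 < L / mu * t by rewrite -ceil_gt0.
have t0 : 0 < t by rewrite (pmulr_rgt0 _ kap0) in kt0.
have r1 : 1 < r by rewrite ltNge; apply/negP => /ln_le0; rewrite -/t leNgt t0.
pose rho := Num.sqrt q.
pose A := Num.sqrt (L * a0).
pose s := Num.sqrt (L / mu).
pose S := Num.sqrt (1 + L / mu).
have rho0 : 0 <= rho by exact: sqrtr_ge0.
have rho2 : rho ^+ 2 = q by rewrite sqr_sqrtr.
have rho1 : rho < 1 by nra.
have A2 : A ^+ 2 = L * a0 by rewrite sqr_sqrtr // mulr_ge0 // ltW.
have s0 : 0 <= s by exact: sqrtr_ge0.
have s2 : s ^+ 2 = L / mu by rewrite sqr_sqrtr // ltW.
have S0 : 0 <= S by exact: sqrtr_ge0.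
have S2 : S ^+ 2 = 1 + L / mu by rewrite sqr_sqrtr // addr_ge0 // ltW.
have gk k : enorm (g (x k)) <= 3 / 2 * (rho ^+ k * A) + Delta * s.
  have h1 := gb (x k).
  have h2 := dbound k.
  have h3 : 2 * L * (f (x k) - fs) <= 2 * L * (q ^+ k * a0 + Delta ^+ 2 / (2 * mu)).
    by apply: ler_wpM2l => //; rewrite mulr_ge0 // ltW.
  have e : 2 * L * (q ^+ k * a0 + Delta ^+ 2 / (2 * mu)) =
      2 * (rho ^+ k * A) ^+ 2 + (Delta * s) ^+ 2.
    rewrite !exprMn A2 s2 -exprM mulnC exprM rho2.
    by field; rewrite lt0r_neq0.
  rewrite e in h3.
  have u0 : 0 <= rho ^+ k * A by rewrite mulr_ge0 // exprn_ge0.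
  have v0 : 0 <= Delta * s by rewrite mulr_ge0 // ltW.
  have h4 : enorm (g (x k)) ^+ 2 <= (3 / 2 * (rho ^+ k * A) + Delta * s) ^+ 2.
    apply: le_trans h1 (le_trans h3 _).
    set u := rho ^+ k * A in u0 *; set v := Delta * s in v0 *; nra.
  move: h4; rewrite ler_pXn2r ?nnegrE ?enorm_ge0 //.
  by rewrite addr_ge0 // mulr_ge0.
have Li : 0 <= L^-1 by rewrite invr_ge0 ltW.
have dist m : enorm (x m - x 0%N) <=
    L^-1 * (3 / 2 * A * (\sum_(k < m) rho ^+ k) + m%:R * (Delta * (s + 1))).
  elim: m => [|m IH].
    rewrite subrr big_ord0 /= mulr0 mul0r addr0 mulr0.
    by rewrite /enorm /dotv big1 ?sqrtr0 // => i _; rewrite mxE mul0r.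
  have -> : x m.+1 - x 0%N = (x m - x 0%N) + (x m.+1 - x m) by rewrite [RHS]addrC addrA subrK.
  apply: le_trans (enorm_triangle _ _) _.
  have e1 : enorm (x m.+1 - x m) = L^-1 * enorm (gt (x m)).
    by rewrite hx (addrC (x m)) addrK enormN enormZ ger0_norm.
  have h2 : enorm (gt (x m)) <= enorm (g (x m)) + Delta.
    have -> : gt (x m) = g (x m) + - (g (x m) - gt (x m)) by rewrite opprB addrC subrK.
    apply: le_trans (enorm_triangle _ _) _.
    by rewrite enormN lerD2l.
  have h3 := le_trans h2 (lerD (gk m) (lexx Delta)).
  have h4 := ler_wpM2l Li h3.
  rewrite e1 big_ord_recr /= -natr1.
  lra.
have geo m : (1 - rho) * (\sum_(k < m) rho ^+ k) = 1 - rho ^+ m.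
  elim: m => [|m IH]; first by rewrite big_ord0 mulr0 expr0 subrr.
  by rewrite big_ord_recr /= mulrDr IH exprS; ring.
have hsum : \sum_(k < N) rho ^+ k <= 2 * (L / mu).
  have h1 : (1 - rho) * (\sum_(k < N) rho ^+ k) <= (1 - rho) * (2 * (L / mu)).
    rewrite geo.
    have e : (1 - rho) * (1 + rho) * (L / mu) = 1.
      by rewrite mulrBl mul1r mulrDr mulr1 -expr2 rho2 /q; field; rewrite !lt0r_neq0.
    have : 0 <= rho ^+ N by rewrite exprn_ge0.
    nra.
  by rewrite ler_pM2l ?subr_gt0 in h1.
rewrite -/S -/A.
have hd := dist N.
have Ntk : N%:R <= L / mu * t + 1.
  have h1 : (N%:Z)%:~R <= Nstar%:~R :> R by rewrite ler_int.
  have h2 := ceilB1_lt (L / mu * t).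
  rewrite -/Nstar intrB in h2.
  have -> : N%:R = (N%:Z)%:~R :> R by [].
  lra.
set c := (Num.ceil t)%:~R.
have tc : t <= c by exact: ceil_ge.
have sS : s <= S by nra.
have S1 : 1 <= S by nra.
have sk : s <= L / mu by nra.
have h6 : 6 * Delta ^+ 2 < mu * a0.
  by move: r1; rewrite /r ltr_pdivlMr ?mul1r // mulr_gt0.
have A2D : 2 * Delta <= A.
  have h7 : mu * a0 <= L * a0 by rewrite ler_pM2r.
  have h8 : (2 * Delta) ^+ 2 <= A ^+ 2.
    rewrite exprMn A2; lra.
  by move: h8; rewrite ler_pXn2r ?nnegrE // mulr_ge0 // ltW.
have mi : 0 <= mu^-1 by rewrite invr_ge0 ltW.
have ha : L^-1 * (3 / 2 * A * (\sum_(k < N) rho ^+ k)) <= 3 * A * mu^-1.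
  have e : L^-1 * (3 / 2 * A * (2 * (L / mu))) = 3 * A * mu^-1.
    by field; rewrite !lt0r_neq0.
  rewrite -e; apply: ler_wpM2l => //; apply: ler_wpM2l => //.
  by rewrite mulr_ge0.
have hb : N%:R * (Delta * (s + 1)) <= (L / mu * t + 1) * (Delta * (s + 1)).
  by apply: ler_wpM2r => //; rewrite mulr_ge0 ?addr_ge0 // ltW.
have ec : L^-1 * ((L / mu * t + 1) * (Delta * (s + 1))) =
    mu^-1 * (Delta * (t * (s + 1))) + L^-1 * (Delta * (s + 1)).
  by field; rewrite !lt0r_neq0.
have hd1 : t * (s + 1) <= c * (2 * S).
  apply: ler_pM; [exact: ltW t0 | by rewrite addr_ge0 | exact: tc | lra].
have hd2 : mu^-1 * (Delta * (t * (s + 1))) <= mu^-1 * (Delta * (c * (2 * S))).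
  by apply: ler_wpM2l => //; apply: ler_wpM2l => //; rewrite ltW.
have he1 : L^-1 * (Delta * (s + 1)) <= L^-1 * (Delta * (2 * (L / mu))).
  apply: ler_wpM2l => //; apply: ler_wpM2l; [exact: ltW D0 | lra].
have he2 : L^-1 * (Delta * (2 * (L / mu))) = mu^-1 * (2 * Delta).
  by field; rewrite !lt0r_neq0.
have he3 : mu^-1 * (2 * Delta) <= mu^-1 * A by apply: ler_wpM2l.
have hL1 := ler_wpM2l Li hb.
have eR : 2 * Delta / mu * S * c + 4 * A / mu =
    mu^-1 * (Delta * (c * (2 * S))) + 4 * A * mu^-1 by field; rewrite lt0r_neq0.
rewrite eR.
rewrite ec in hL1.
lra.
Qed.
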